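(* For every $d\in\mathbb{N}$ and every game $\mathcal{M}\subseteq\mathbb{N}_0^d$, the sequence $(\mathcal{M}^i)_{i\ge0}$ converges, i.e. the limit game $\mathcal{M}^\infty$ exists, and $\mathcal{M}^\infty$ is reflexive.
   Context: For $d\in\mathbb{N}$ a game is a set $\mathcal{M}\subseteq\mathbb{N}_0^d$ of moves. From position $\boldsymbol x\in\mathbb{N}_0^d$ a player may move to $\boldsymbol y\in\mathbb{N}_0^d$ iff $\boldsymbol x-\boldsymbol y\in\mathcal{M}$. Misère play: a player who cannot move wins. If $\boldsymbol 0\in\mathcal{M}$, $P(\mathcal{M})=\varnothing$. Otherwise: a position is an N-position if it has no option or some option is a P-position; otherwise it is a P-position; $P(\mathcal{M})$ denotes the set of P-positions. The $\star$-operator is $\mathcal{M}^\star=P(\mathcal{M})$; $\mathcal{M}^0=\mathcal{M}$, $\mathcal{M}^i=(\mathcal{M}^{i-1})^\star$. The limit $\mathcal{M}^\infty$ exists if for every $\boldsymbol x\in\mathbb{N}_0^d$ either $\boldsymbol x\in\mathcal{M}^i$ for all sufficiently large $i$ or $\boldsymbol x\notin\mathcal{M}^i$ for all sufficiently large $i$; then $\mathcal{M}^\infty$ is the set of $\boldsymbol x$ of the first kind. A game is reflexive if $\mathcal{M}=\mathcal{M}^\star$. *)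

(* Defs.v *)
From mathcomp Require Import all_boot.
Set Implicit Arguments. Unset Strict Implicit. Unset Printing Implicit Defensive.

Definition pos (d : nat) := 'I_d -> nat.
Definition game (d : nat) := pos d -> Prop.

Definition zero_pos (d : nat) : pos d := fun _ => 0.

Definition is_option d (M : game d) (x y : pos d) : Prop :=
  (forall i, y i <= x i) /\ M (fun i => x i - y i).

(* N- and P-positions (misere), defined by mutual recursion on the
   (well-founded, since 0 notin M) option relation. *)
Inductive Npos d (M : game d) : pos d -> Prop :=
| Npos_noopt x : (forall y, ~ is_option M x y) -> Npos M x
| Npos_toP x y : is_option M x y -> Ppos M y -> Npos M x
with Ppos d (M : game d) : pos d -> Prop :=
| Ppos_intro x : (exists y, is_option M x y) ->
                 (forall y, is_option M x y -> Npos M y) -> Ppos M x.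

Definition Pset d (M : game d) : game d :=
  fun x => ~ M (@zero_pos d) /\ Ppos M x.

Fixpoint star_iter d (M : game d) (i : nat) : game d :=
  match i with 0 => M | i'.+1 => Pset (star_iter M i') end.

Definition limit_is d (M : game d) (L : game d) : Prop :=
  forall x : pos d, exists n, forall i, n <= i -> (star_iter M i x <-> L x).

Definition reflexive_game d (M : game d) : Prop := forall x, M x <-> Pset M x.

(* Main.v *)
Require Import Defs.
From mathcomp Require Import all_boot.
From Stdlib Require Import Classical FunctionalExtensionality.
Set Implicit Arguments. Unset Strict Implicit. Unset Printing Implicit Defensive.

Scheme Npos_mut := Induction for Npos Sort Prop
with Ppos_mut := Induction for Ppos Sort Prop.

Section S.
Variable d : nat.
Implicit Types (M : game d) (x y z : pos d).

Definition le x y := forall i, x i <= y i.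

Lemma Mext M x y : (forall i, x i = y i) -> M x -> M y.
Proof. by move=> h; rewrite (functional_extensionality x y h). Qed.

Lemma loc M M' :
  (forall y, Npos M y -> (forall z, le z y -> (M z <-> M' z)) -> Npos M' y) /\
  (forall y, Ppos M y -> (forall z, le z y -> (M z <-> M' z)) -> Ppos M' y).
Proof.
have H1 := (@Npos_mut d M (fun y _ => (forall z, le z y -> (M z <-> M' z)) -> Npos M' y)
                  (fun y _ => (forall z, le z y -> (M z <-> M' z)) -> Ppos M' y)).
have H2 := (@Ppos_mut d M (fun y _ => (forall z, le z y -> (M z <-> M' z)) -> Npos M' y)
                  (fun y _ => (forall z, le z y -> (M z <-> M' z)) -> Ppos M' y)).
have c1 : forall (x : pos d) (n : forall y : pos d, ~ is_option (d:=d) M x y),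
   (forall z, le z x -> (M z <-> M' z)) -> Npos M' x.
  move=> x hno ag. apply: Npos_noopt => y [hle hm]. apply: (hno y); split=>//.
  by apply/(ag _ _).2 => // i; exact: leq_subr.
have c2 : forall (x y : pos d) (i : is_option (d:=d) M x y)
          (p : Ppos (d:=d) M y),
        ((forall z, le z y -> (M z <-> M' z)) -> Ppos M' y) ->
        (forall z, le z x -> (M z <-> M' z)) -> Npos M' x.
  move=> x y [hle hm] hp IH ag. apply: (Npos_toP (y:=y)).
    split=>//. by apply/(ag _ _).1 => // i; exact: leq_subr.
  by apply: IH => z hz; apply: ag => i; exact: leq_trans (hz i) (hle i).
have c3 : forall (x : pos d) (e : exists y : pos d, is_option (d:=d) M x y)
          (n : forall y : pos d, is_option (d:=d) M x y -> Npos (d:=d) M y),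
        (forall (y : pos d) (i : is_option (d:=d) M x y),
           (forall z, le z y -> (M z <-> M' z)) -> Npos M' y) ->
        (forall z, le z x -> (M z <-> M' z)) -> Ppos M' x.
  move=> x [y [hle hm]] hall IH ag. apply: Ppos_intro.
    exists y; split=>//; by apply/(ag _ _).1 => // i; exact: leq_subr.
  move=> y' [hle' hm']. have o : is_option M x y'.
    by split=>//; apply/(ag _ _).2 => // i; exact: leq_subr.
  by apply: (IH y' o) => z hz; apply: ag => i; exact: leq_trans (hz i) (hle' i).
split.
- move=> y h; exact: (H1 c1 c2 c3 y h).
- move=> y h; exact: (H2 c1 c2 c3 y h).
Qed.


Lemma Npos0 M : ~ M (@zero_pos d) -> Npos M (@zero_pos d).
Proof.
move=> h0; apply: Npos_noopt => y [hle hm]; apply: h0; apply: Mext hm => i.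
by rewrite /zero_pos; have := hle i; rewrite /zero_pos leqn0 => /eqP ->.
Qed.

Lemma Ppos0 M : Ppos M (@zero_pos d) -> M (@zero_pos d).
Proof.
move=> hP; inversion hP as [x [y [hle hm]] _ ]; apply: Mext hm => i.
by rewrite /zero_pos.
Qed.

Lemma mono M M' x :
  (forall z, le z x -> (exists j, z j < x j) -> (M z <-> M' z)) ->
  (M x -> M' x) -> ~ M' (@zero_pos d) -> Ppos M x -> Ppos M' x.
Proof.
move=> ag hx h0 hP; inversion hP as [x0 [y [hle hm]] hall]; subst x0.
apply: Ppos_intro.
  exists y; split=> //.
  case: (classic (exists j, x j - y j < x j)) => [hj|hj].
    by apply/(ag _ _ hj).1 => // i; exact: leq_subr.
  have e : forall i, x i = x i - y i.
    move=> i; apply/eqP; rewrite eqn_leq leq_subr andbT leqNgt.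
    by apply/negP => hi; apply: hj; exists i.
  by apply: Mext (hx (Mext (fun i => esym (e i)) hm)).
move=> y' [hle' hm'].
case: (classic (forall j, y' j = 0)) => [hz|hz].
  have -> : y' = @zero_pos d by apply: functional_extensionality.
  exact: Npos0.
have [j hj] := not_all_ex_not _ _ hz.
have hlt : x j - y' j < x j.
  by rewrite ltn_subrL; apply/andP; split; [rewrite lt0n; apply/eqP|
     apply: leq_trans (hle' j); rewrite lt0n; apply/eqP].
have hmy : M (fun i => x i - y' i).
  by apply/(ag _ _ _).2 => //; [move=> i; exact: leq_subr| exists j].
have hN : Npos M y' by apply: hall; split.
have hne : exists k, y' k < x k.
  apply: NNPP => hn; apply: h0; apply: Mext hm' => i.
  rewrite /zero_pos; apply/eqP; rewrite subn_eq0.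
  by rewrite leqNgt; apply/negP => hi; apply: hn; exists i.
have [k hk] := hne.
apply: ((loc M M').1 y' hN) => z hzz; apply: ag.
  by move=> i; exact: leq_trans (hzz i) (hle' i).
by exists k; exact: leq_ltn_trans (hzz k) hk.
Qed.


Definition sumx x := \sum_(i < d) x i.
Definition dec x j : pos d := fun i => if i == j then (x i).-1 else x i.

Lemma sum_dec x j : 0 < x j -> sumx (dec x j) < sumx x.
Proof.
move=> hj; rewrite /sumx (bigD1 j) //= [X in _ < X](bigD1 j) //= /dec eqxx.
rewrite (eq_bigr (fun i => x i)); last by move=> i /negbTE ->.
by rewrite ltn_add2r prednK.
Qed.

Lemma unif (P : 'I_d -> nat -> Prop) :
  (forall j n m, P j n -> n <= m -> P j m) -> (forall j, exists n, P j n) ->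
  exists n, forall j, P j n.
Proof.
move=> hm he.
suff h : forall s : seq 'I_d, exists n, forall j, j \in s -> P j n.
  by have [n hn] := h (enum 'I_d); exists n => j; apply: hn; rewrite mem_enum.
elim=> [|a s [n hn]]; first by exists 0.
have [m hm'] := he a.
exists (maxn n m) => j; rewrite inE => /orP [/eqP ->|hj].
  by apply: hm hm' _; rewrite leq_maxr.
by apply: hm (hn j hj) _; rewrite leq_maxl.
Qed.

Variable M : game d.
Notation S := (star_iter M).

Lemma S0 i : 0 < i -> ~ S i (@zero_pos d).
Proof.
case: i => // i _ [h0 hP]; exact: h0 (Ppos0 hP).
Qed.

Definition stable n z := forall i, n <= i -> (S i z <-> S n z).

Lemma stable_mono n m z : stable n z -> n <= m -> stable m z.
Proof.
move=> h hnm i hi; split=> hh.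
  by apply/(h m hnm).2/(h i (leq_trans hnm hi)).1.
by apply/(h i (leq_trans hnm hi)).2/(h m hnm).1.
Qed.

Lemma step x : (forall y, sumx y < sumx x -> exists n, forall z, le z y -> stable n z) ->
  exists n, forall z, le z x -> stable n z.
Proof.
move=> IH.
pose P := fun j n => forall z, le z x -> z j < x j -> stable n z.
have [N hN] : exists N, forall j, P j N.
  apply: (@unif P).
    by move=> j n m h hnm z hz hzj; apply: stable_mono (h z hz hzj) hnm.
  move=> j; case: (posnP (x j)) => [h0|hpos].
    by exists 0 => z _; rewrite h0.
  have [n hn] := IH _ (sum_dec hpos).
  exists n => z hz hzj; apply: hn => i; rewrite /dec.
  case: eqP => [->|_]; last exact: hz.
  by rewrite -ltnS prednK.
pose Nn := maxn N 1.
have strict : forall z, le z x -> (exists j, z j < x j) -> stable Nn z.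
  move=> z hz [j hj]; apply: stable_mono (hN j z hz hj) _; exact: leq_maxl.
have hNn : 0 < Nn by rewrite leq_maxr.
have agree : forall i i', Nn <= i -> Nn <= i' -> forall z, le z x ->
    (exists j, z j < x j) -> (S i z <-> S i' z).
  move=> i i' hi hi' z hz hj; have := strict z hz hj.
  move=> st; split=> h.
    by apply/(st i' hi').2/(st i hi).1.
  by apply/(st i hi).2/(st i' hi').1.
have [n0 hn0] : exists n0, stable n0 x.
  case: (classic (exists i, Nn <= i /\ S i x)) => [[i0 [hi0 hx0]]|hno]; last first.
    exists Nn => i hi; split=> h; first by exfalso; apply: hno; exists i.
    by exfalso; apply: hno; exists Nn.
  case: (classic (S i0.+1 x)) => h1.
    have all : forall t, S (i0 + t) x.
      elim=> [|t IHt]; first by rewrite addn0.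
      rewrite addnS; split; first by apply: S0; rewrite addn_gt0 (leq_trans hNn hi0).
      apply: (mono (M := S i0)) (proj2 h1).
      - move=> z hz hj; apply: agree => //; exact: leq_trans hi0 (leq_addr _ _).
      - by move=> _.
      - by apply: S0; rewrite addn_gt0 (leq_trans hNn hi0).
    exists i0 => i hi; rewrite -(subnKC hi); split=> _; [exact: hx0 | exact: all].
  have none : forall k, Nn <= k -> ~ S k.+1 x.
    move=> k hk [hz hP]; apply: h1; split; first by apply: S0; exact: leq_trans hNn hi0.
    apply: (mono (M := S k)) hP.
    - by move=> z hz' hj; apply: agree.
    - by move=> _.
    - by apply: S0; exact: leq_trans hNn hi0.
  exists Nn.+1 => i hi; split=> h.
    by exfalso; move: hi h; case: i => // i hi; apply: none.
  by exfalso; apply: (none Nn (leqnn _)).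
exists (maxn Nn n0) => z hz.
case: (classic (exists j, z j < x j)) => [hj|hj].
  by apply: stable_mono (strict z hz hj) _; rewrite leq_maxl.
have -> : z = x.
  apply: functional_extensionality => i; apply/eqP; rewrite eqn_leq hz /= leqNgt.
  by apply/negP => hi; apply: hj; exists i.
by apply: stable_mono hn0 _; rewrite leq_maxr.
Qed.

Lemma Qall x : exists n, forall z, le z x -> stable n z.
Proof.
suff : forall k x, sumx x < k -> exists n, forall z, le z x -> stable n z.
  by move=> h; apply: (h (sumx x).+1).
elim=> // k IHk y hy; apply: step => y' hy'; apply: IHk.
exact: leq_trans hy' hy.
Qed.

Definition Lim : game d := fun x => exists n, forall i, n <= i -> S i x.

Lemma Lchar n z : stable n z -> forall i, n <= i -> (S i z <-> Lim z).
Proof.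
move=> st i hi; split=> h.
  exists n => i' hi'; apply/(st i' hi').2/(st i hi).1/h.
case: h => n' hn'; apply/(st i hi).2.
have := hn' (maxn n n') (leq_maxr _ _); apply: (st _ (leq_maxl _ _)).1.
Qed.

End S.

Theorem theorem3 (d : nat) (M : game d) :
  0 < d ->
  exists Minf : game d, limit_is M Minf /\ reflexive_game Minf.
Proof.
move=> _; exists (Lim M); split.
  move=> x; have [n hn] := Qall M x; exists n => i hi.
  by apply: Lchar (hn x (fun _ => leqnn _)) i hi.
move=> x; have [n hn] := Qall M x.
have ag : forall z, le z x -> (star_iter M n z <-> Lim M z).
  by move=> z hz; apply: Lchar (hn z hz) n (leqnn _).
have h0 : le (@zero_pos d) x by move=> i.
rewrite -(Lchar (hn x (fun _ => leqnn _)) (leqnSn n)) /=.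
split=> [[hz hP]|[hz hP]]; split.
- by move=> hl; apply: hz; apply/(ag _ h0).2.
- by apply: ((loc _ _).2 _ hP) => z hzz; apply: ag.
- by move=> hl; apply: hz; apply/(ag _ h0).1.
- apply: ((loc _ _).2 _ hP) => z hzz; split=> h; [apply/(ag _ hzz).2 | apply/(ag _ hzz).1]; exact h.
Qed.
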